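(* Let $G=(V,E)$ be a connected Eulerian digraph and $s\in V$ any vertex. Then the degree of the parking function enumerator ${\rm park}_{G,s}$ equals $|E|-|V|+1-{\rm minfas}(G)$, where ${\rm minfas}(G)$ is the minimum cardinality of a feedback arc set of $G$. Equivalently, in the greedoid polynomial of the branching greedoid of $G$ rooted at $s$, the coefficient of $x^i$ is zero for $i=0,\dots,{\rm minfas}(G)-1$ and nonzero for $i={\rm minfas}(G)$. *)

(* Defs.v *)
(* A digraph is given by finite vertex/arc types and
   source/target maps (multiple arcs and loops allowed). *)
From mathcomp Require Import all_boot all_order all_algebra.
Set Implicit Arguments. Unset Strict Implicit. Unset Printing Implicit Defensive.
Import GRing.Theory Num.Theory.
Local Open Scope ring_scope.

Section Digraph.
Variables (V E : finType) (src tgt : E -> V).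

Definition arc_rel : rel V := fun u v => [exists e, (src e == u) && (tgt e == v)].

Definition dconnected : Prop :=
  forall u v : V, connect (fun x y => arc_rel x y || arc_rel y x) u v.

Definition eulerian : Prop :=
  forall v : V, #|[set e | src e == v]| = #|[set e | tgt e == v]|.

Definition dir_cycle (p : seq E) : bool :=
  (p != [::]) && cycle (fun e f => tgt e == src f) p.

Definition feedback_arc_set (F : {set E}) : Prop :=
  forall p : seq E, dir_cycle p -> has (fun e => e \in F) p.

Definition is_minfas (m : nat) : Prop :=
  (exists F : {set E}, feedback_arc_set F /\ #|F| = m) /\
  (forall F : {set E}, feedback_arc_set F -> (m <= #|F|)%N).

Definition parking (s : V) (f : V -> nat) : bool :=
  (f s == 0%N) &&
  [forall A : {set V}, ((A != set0) && (s \notin A)) ==>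
     [exists v in A, (f v < #|[set e | (src e == v) && (tgt e \notin A)]|)%N]].

(* parking function enumerator  park_{G,s}(y) = sum_f y^{|f|}.
   Every parking function takes values <= #|E| (take A = {v}),
   so ranging over functions V -> 'I_(#|E|.+1) enumerates all of them. *)
Definition park (s : V) : {poly int} :=
  \sum_(x : {ffun V -> 'I_(#|E|.+1)} | parking s (fun v => nat_of_ord (x v)))
     'X^(\sum_(v : V) nat_of_ord (x v)).

End Digraph.

(* Main.v *)
Require Import Defs.
From mathcomp Require Import all_boot all_order all_algebra.
From mathcomp Require Import zify ring.

Section Aux.
Set Implicit Arguments. Unset Strict Implicit.
Variables (V E : finType) (src tgt : E -> V).

Definition cost (r : V -> nat) : {set E} := [set e | (r (src e) <= r (tgt e))%N].
Definition back (r : V -> nat) (v : V) : {set E} :=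
  [set e | (src e == v) && (r (tgt e) < r v)%N].

Lemma card_part (g : E -> V) (P : pred E) (B : {set V}) :
  #|[set e | P e && (g e \in B)]| = (\sum_(v in B) #|[set e | P e && (g e == v)]|)%N.
Proof.
rewrite -sum1dep_card (partition_big g (mem B)) /=; last by move=> e /andP[].
apply: eq_bigr => v vB; rewrite -sum1dep_card; apply: eq_bigl => e.
case: eqP => [->|]; rewrite ?vB ?andbT ?andbF //.
Qed.

Lemma balance (Heul : eulerian src tgt) (B : {set V}) :
  #|[set e | (src e \in B) && (tgt e \notin B)]| =
  #|[set e | (src e \notin B) && (tgt e \in B)]|.
Proof.
have h1 : #|[set e | src e \in B]| = #|[set e | tgt e \in B]|.
  have c1 := card_part src predT B; have c2 := card_part tgt predT B.
  have -> : [set e | src e \in B] = [set e | predT e && (src e \in B)] by [].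
  have -> : [set e | tgt e \in B] = [set e | predT e && (tgt e \in B)] by [].
  rewrite c1 c2; apply: eq_bigr => v _; exact: Heul.
have a1 := cardsID [set e | tgt e \in B] [set e | src e \in B].
have a2 := cardsID [set e | src e \in B] [set e | tgt e \in B].
have e1 : [set e | src e \in B] :&: [set e | tgt e \in B] =
          [set e | tgt e \in B] :&: [set e | src e \in B] by rewrite setIC.
have e2 : [set e | src e \in B] :\: [set e | tgt e \in B] =
  [set e | (src e \in B) && (tgt e \notin B)].
  by apply/setP => e; rewrite !inE andbC.
have e3 : [set e | tgt e \in B] :\: [set e | src e \in B] =
  [set e | (src e \notin B) && (tgt e \in B)].
  by apply/setP => e; rewrite !inE.
rewrite -e2 -e3; move: a1 a2; rewrite h1 e1 => <-; lia.
Qed.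


Lemma sum_back r : (\sum_v #|back r v| + #|cost r|)%N = #|E|.
Proof.
have -> : (\sum_v #|back r v|)%N = #|~: cost r|.
  have := card_part src [pred e | r (tgt e) < r (src e)]%N setT.
  have -> : [set e | [pred e | r (tgt e) < r (src e)]%N e && (src e \in setT)] = ~: cost r.
    by apply/setP => e; rewrite !inE andbT ltnNge.
  move=> ->; apply: eq_big => [v|v _]; first by rewrite inE.
  apply: eq_card => e; rewrite !inE /=.
  by case: eqP => [->|]; rewrite ?andbT ?andbF.
by rewrite addnC cardsC.
Qed.

Lemma shift_cost (Heul : eulerian src tgt) r (B : {set V}) K :
  (forall v, r v < K)%N ->
  (forall e, src e \in B -> tgt e \notin B -> r (src e) < r (tgt e))%N ->
  (forall e, src e \notin B -> tgt e \in B -> r (tgt e) < r (src e))%N ->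
  #|cost (fun v => if v \in B then r v + K else r v)| = #|cost r|.
Proof.
move=> hK hout hin.
set r' := fun v => _.
set Out := [set e | (src e \in B) && (tgt e \notin B)].
set In := [set e | (src e \notin B) && (tgt e \in B)].
have hb := balance Heul B.
have eD : cost r :\: Out = cost r' :\: In.
  apply/setP => e; rewrite !inE /r'.
  case sB: (src e \in B); case tB: (tgt e \in B) => //=.
  - by rewrite leq_add2r.
  - apply/esym/negbTE; rewrite -ltnNge; apply: (leq_trans (hK _)); exact: leq_addl.
  - by apply/negbTE; rewrite -ltnNge; apply: hin; rewrite ?sB ?tB.
have s1 : cost r :&: Out = Out.
  apply/setIidPr/subsetP => e; rewrite !inE => /andP[a b]; exact/ltnW/hout.
have s2 : cost r' :&: In = In.
  apply/setIidPr/subsetP => e; rewrite !inE /r' => /andP[a b].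
  by rewrite (negbTE a) b ltnW // ltn_addl.
have := cardsID Out (cost r); have := cardsID In (cost r').
by rewrite s1 s2 eD -/Out -/In hb => <- <-.
Qed.

Lemma cost_fas r : feedback_arc_set src tgt (cost r).
Proof.
move=> p /andP[pn cyc]; apply/negPn/negP; rewrite -all_predC => /allP hall.
have key : forall x, x \in p -> r (src x) < r (src (prev p x)).
  move=> x xp; have /eqP <- := prev_cycle cyc xp.
  have := hall _ (etrans (mem_prev p x) xp); rewrite /= inE -ltnNge //.
have ex : forall k, exists2 x, x \in p & (k <= r (src x))%N.
  elim=> [|k [x xp hk]].
    by case: p pn {cyc hall key} => // x p _; exists x; rewrite ?inE ?eqxx.
  exists (prev p x); first by rewrite mem_prev.
  exact: leq_ltn_trans hk (key _ xp).
have [x _ hx] := ex (\max_(e : E) r (src e)).+1.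
by have := @leq_bigmax _ (fun e => r (src e)) x; rewrite leqNgt hx.
Qed.

Lemma fas_lb m (Hm : is_minfas src tgt m) r : (m <= #|cost r|)%N.
Proof. by case: Hm => _ h; apply: h; apply: cost_fas. Qed.

Definition succF (F : {set E}) : rel E := fun e e' => (tgt e == src e') && (e' \notin F).
Definition OutF (F : {set E}) v :=
  [set e' | [exists e, [&& src e == v, e \notin F & connect (succF F) e e']]].

Lemma path_notF F x p : path (succF F) x p -> all (fun y => y \notin F) p.
Proof.
elim: p x => //= y p IH x /andP[/andP[_ ->] hp]; exact: IH hp.
Qed.

Lemma rank_fas F : feedback_arc_set src tgt F ->
  forall e, e \notin F -> (#|OutF F (tgt e)| < #|OutF F (src e)|)%N.
Proof.
move=> hF e eF; apply: proper_card; apply/properP; split.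
  apply/subsetP => x; rewrite !inE => /existsP[e1 /and3P[/eqP h1 h2 h3]].
  apply/existsP; exists e; rewrite eqxx eF /=.
  apply: connect_trans h3; apply: connect1; by rewrite /succF h1 eqxx h2.
exists e; first by rewrite inE; apply/existsP; exists e; rewrite eqxx eF connect0.
rewrite inE; apply/existsP => -[e1 /and3P[/eqP h1 h2 /connectP[p hp hl]]].
have cyc : cycle (succF F) (e1 :: p).
  rewrite /= rcons_path hp /= -hl /succF h1 eqxx h2 //.
have cyc' : cycle (fun a b => tgt a == src b) (e1 :: p).
  by apply: sub_cycle cyc => a b /andP[].
have hd : dir_cycle src tgt (e1 :: p) by rewrite /dir_cycle cyc'.
have := hF _ hd; rewrite /= => /orP[]; first by rewrite (negbTE h2).
by move/hasP => [y yp yF]; have := allP (path_notF hp) y yp; rewrite yF.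
Qed.

Lemma rank_exists F : feedback_arc_set src tgt F ->
  exists r : V -> nat, injective r /\ cost r \subset F.
Proof.
move=> hF; set n := #|V|.
exists (fun v => #|OutF F v| * n + enum_rank v)%N; split.
  move=> u v /(congr1 (modn^~ n)); rewrite !modnMDl !modn_small ?ltn_ord //.
  by move=> /val_inj/enum_rank_inj.
apply/subsetP => e; rewrite inE; apply: contraTT => eF.
have h := rank_fas hF eF; rewrite -ltnNge.
have := ltn_ord (enum_rank (tgt e)); have := ltn_ord (enum_rank (src e)).
rewrite -/n => a b; nia.
Qed.

Lemma shift_inj r (B : {set V}) K : injective r -> (forall v, r v < K)%N ->
  injective (fun v => if v \in B then r v + K else r v)%N.
Proof.
move=> rinj hK x y; case xB: (x \in B); case yB: (y \in B) => h.
- by apply: rinj; apply/eqP; rewrite -(eqn_add2r K) h.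
- by have := hK y; rewrite -h ltnNge leq_addl.
- by have := hK x; rewrite h ltnNge leq_addl.
- exact: rinj.
Qed.

Section Step.
Variables (s : V) (m : nat).
Hypotheses (Heul : eulerian src tgt) (Hconn : dconnected src tgt)
  (Hm : is_minfas src tgt m).

Definition Inv r (P : {set V}) :=
  [/\ injective r, (#|cost r| <= m)%N, s \in P,
      (forall p u, p \in P -> u \notin P -> r p < r u)%N &
      (forall v, v \in P -> v != s -> 0 < #|back r v|)%N] /\
      (forall v, r s <= r v)%N.

Definition crossing (P : {set V}) u :=
  [exists e, ((src e == u) && (tgt e \in P)) || ((tgt e == u) && (src e \in P))].

Lemma cross_exists (P : {set V}) : s \in P -> P != setT -> exists u, (u \notin P) && crossing P u.
Proof.
move=> sP PT.
have [u uP] : exists u, u \notin P.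
  case: (pickP [pred u | u \notin P]) => [u uP|h]; first by exists u.
  by case/negP: PT; apply/eqP/setP => u; have := h u; rewrite !inE /= => /negbFE ->.
case: (pickP [pred u | (u \notin P) && crossing P u]) => [x hx|hn]; first by exists x.
have cl : closed (fun x y => arc_rel src tgt x y || arc_rel src tgt y x) (mem P).
  apply: intro_closed; first by apply: sym_connect_sym => x y; rewrite orbC.
  move=> x y /orP[]/existsP[e /andP[/eqP hs /eqP ht]] xP; apply/negPn/negP => yP;
    have := hn y; rewrite /= yP /= => /negbT/existsP; apply; exists e.
  - by rewrite ht eqxx hs xP orbT.
  - by rewrite hs eqxx ht xP.
  have := closed_connect cl (Hconn s u); rewrite sP => /esym uP'.
by rewrite uP' in uP.
Qed.

Lemma step r (P : {set V}) : Inv r P -> P != setT -> exists r' w, w \notin P /\ Inv r' (w |: P).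
Proof.
case=> [[rinj rcost sP pre bk] smin] Pn.
have [u0 u0X] := cross_exists sP Pn.
case: (@arg_minnP _ u0 [pred u | (u \notin P) && crossing P u] r u0X) => w /andP[wP wX] wmin.
pose K := (\max_v r v).+1.
have hK : forall v, (r v < K)%N by move=> v; rewrite ltnS; exact: (@leq_bigmax _ r v).
pose B := [set u | (u \notin P) && (r u < r w)%N].
have noX : forall u, u \in B -> ~~ crossing P u.
  move=> u; rewrite inE => /andP[uP ltu]; apply/negP => cu.
  by have := wmin u; rewrite /= uP cu => /(_ isT); rewrite leqNgt ltu.
have outB : forall e, src e \in B -> tgt e \notin P.
  move=> e eB; apply: contraNN (noX _ eB) => tP; apply/existsP; exists e.
  by rewrite eqxx tP.
have inB : forall e, tgt e \in B -> src e \notin P.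
  move=> e eB; apply: contraNN (noX _ eB) => tP; apply/existsP; exists e.
  by rewrite eqxx tP orbT.
pose r' := fun v => if v \in B then (r v + K)%N else r v.
have cost' : #|cost r'| = #|cost r|.
  apply: shift_cost => // e sB tB.
  - have tP := outB e sB; move: sB tB; rewrite !inE tP /= => /andP[_ a].
    rewrite -leqNgt => b; exact: leq_trans a b.
  - have sP' := inB e tB; move: sB tB; rewrite !inE sP' /= => a /andP[_ b].
    rewrite -leqNgt in a; exact: leq_trans b a.
have r'P : forall v, v \in P -> r' v = r v.
  by move=> v vP; rewrite /r' inE vP.
have r'ge : forall v, (r v <= r' v)%N.
  by move=> v; rewrite /r'; case: (v \in B) => //; apply: leq_addr.
have r'w : r' w = r w by rewrite /r' inE ltnn andbF.
have r'inj : injective r' by apply: shift_inj.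
have wmin' : forall u, u \notin P -> u != w -> (r' w < r' u)%N.
  move=> u uP uw; rewrite r'w /r'; case uB: (u \in B).
  - exact: leq_trans (hK w) (leq_addl _ _).
  - move: uB; rewrite inE uP /= => /negbT; rewrite -leqNgt leq_eqVlt.
    case/orP => [/eqP h|//]; by have := rinj _ _ h => hh; rewrite hh eqxx in uw.
case: (boolP [exists e, (src e == w) && (tgt e \in P)]) => [hw|hw].
- exists r', w; split => //; split; first split => //.
  + by rewrite cost'.
  + by rewrite setU1r.
  + move=> p u; rewrite !inE => /orP[/eqP->|pP] /norP[uw uP].
    * exact: wmin'.
    * rewrite r'P //; exact: leq_trans (pre _ _ pP uP) (r'ge u).
  + move=> v; rewrite !inE => /orP[/eqP->|vP] vs.
    * case/existsP: hw => e /andP[/eqP se tP]; apply/card_gt0P; exists e.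
      by rewrite inE se eqxx /= r'w r'P // pre.
    * apply: leq_trans (bk v vP vs) _; apply: subset_leq_card; apply/subsetP => e.
      rewrite !inE => /andP[/eqP se lt].
      have tP : tgt e \in P.
        apply/negPn/negP => tP; have := pre _ _ vP tP; by rewrite ltnNge ltnW.
      by rewrite se eqxx r'P // r'P.
  + by move=> v; rewrite r'P //; exact: leq_trans (smin v) (r'ge v).
- exfalso.
  have [e0 se0 te0] : exists2 e, src e \in P & tgt e = w.
    case/existsP: wX => e /orP[/andP[/eqP se tP]|/andP[/eqP te sP']].
      by case/existsP: hw; exists e; rewrite se eqxx tP.
    by exists e.
  pose r'' := fun v => if v == w then 0%N else (r' v).+1.
  have sub : cost r'' \proper cost r'.
    apply/properP; split.
      apply/subsetP => e; rewrite !inE /r''.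
      case: (eqVneq (src e) w) => hs; case: (eqVneq (tgt e) w) => ht //.
      * by rewrite hs ht.
      * move=> _; rewrite hs; apply: ltnW; apply: wmin' => //.
        apply/negP => tP; move: hw; apply/negP/negPn/existsP; exists e.
        by rewrite hs eqxx tP.
    exists e0; rewrite !inE /r'' te0 ?eqxx; first by rewrite r'w r'P // ltnW // pre.
    by case: (eqVneq (src e0) w) => // h; move: wP; rewrite -h se0.
  have := proper_card sub; rewrite cost'; have := fas_lb Hm r''.
  move=> a b; have := leq_ltn_trans a b; rewrite ltnNge rcost //.
Qed.

Lemma base : exists r, Inv r [set s].
Proof.
case: Hm => [[F [hF cF]] _].
have [r2 [r2inj r2F]] := rank_exists hF.
pose K := (\max_v r2 v).+1.
have hK : forall v, (r2 v < K)%N by move=> v; rewrite ltnS; exact: (@leq_bigmax _ r2 v).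
pose B := [set v | (r2 v < r2 s)%N].
pose r3 := fun v => if v \in B then (r2 v + K)%N else r2 v.
have c3 : #|cost r3| = #|cost r2|.
  apply: shift_cost => // e; rewrite !inE -leqNgt.
  - by move=> a b; exact: leq_trans a b.
  - by move=> a b; exact: leq_trans b a.
have r3s : r3 s = r2 s by rewrite /r3 inE ltnn.
have pre : forall u, u != s -> (r3 s < r3 u)%N.
  move=> u us; rewrite r3s /r3; case uB: (u \in B).
  - exact: leq_trans (hK s) (leq_addl _ _).
  - move: uB; rewrite inE => /negbT; rewrite -leqNgt leq_eqVlt.
    case/orP => [/eqP h|//]; by have := r2inj _ _ h => hh; rewrite hh eqxx in us.
exists r3; split; first split.
- exact: shift_inj.
- by rewrite c3 -cF subset_leq_card.
- by rewrite set11.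
- move=> p u; rewrite !inE => /eqP -> us; exact: pre.
- by move=> v; rewrite inE => ->.
- move=> v; case: (eqVneq v s) => [->//|vs]; exact/ltnW/pre.
Qed.

Lemma all_inv : forall k r (P : {set V}), Inv r P -> #|~: P| = k -> exists r', Inv r' setT.
Proof.
elim=> [|k IH] r P hI hk.
  have hP : P = setT.
    apply/setP => v; have : v \notin ~: P by rewrite (cards0_eq hk) inE.
    by rewrite !inE negbK.
  by rewrite hP in hI; exists r.
have PT : P != setT.
  by apply/negP => /eqP hP; move: hk; rewrite hP setCT cards0.
have [r' [w [wP hI']]] := step hI PT.
apply: (IH r' _ hI'); rewrite setCU.
have := cardsD1 w (~: P); rewrite hk inE wP add1n => -[->].
by apply: eq_card => v; rewrite !inE andbC.
Qed.

Lemma super_rank (f : V -> nat) :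
  (forall A : {set V}, A != set0 -> s \notin A ->
     exists2 v, v \in A & (f v < #|[set e | (src e == v) && (tgt e \notin A)]|)%N) ->
  forall k (A : {set V}), #|A| = k -> s \notin A ->
  exists r : V -> nat, (forall v, v \notin A -> r v = 0%N) /\
                       (forall v, v \in A -> f v < #|back r v|)%N.
Proof.
move=> hp; elim=> [|k IH] A hk sA.
  exists (fun _ => 0%N); split => // v; by rewrite (cards0_eq hk) inE.
have A0 : A != set0 by apply/negP => /eqP h; move: hk; rewrite h cards0.
have [v0 v0A hv0] := hp A A0 sA.
have hk' : #|A :\ v0| = k by move: hk; rewrite (cardsD1 v0) v0A add1n => -[].
have sA' : s \notin A :\ v0 by rewrite !inE negb_and sA orbT.
have [r' [r'0 r'b]] := IH _ hk' sA'.
pose r := fun v => if v \in A :\ v0 then (r' v).+1 else if v == v0 then 1%N else 0%N.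
exists r; split.
  move=> v vA; rewrite /r !inE (negbTE vA) andbF.
  by case: eqP => // h; rewrite h v0A in vA.
move=> v vA; case: (eqVneq v v0) => [->|vv0].
  apply: leq_trans hv0 _; apply: subset_leq_card; apply/subsetP => e.
  rewrite !inE => /andP[/eqP se tA]; rewrite se eqxx /= /r !inE eqxx /= (negbTE tA) andbF.
  by case: eqP => // h; rewrite h v0A in tA.
have vA' : v \in A :\ v0 by rewrite !inE vv0 vA.
apply: leq_trans (r'b _ vA') _; apply: subset_leq_card; apply/subsetP => e.
rewrite !inE => /andP[/eqP se lt]; rewrite se eqxx /= /r vA'.
case tA: (tgt e \in A :\ v0) => //.
have := r'0 _ (negbT tA) => h0; rewrite h0 in lt.
by case: (_ == v0); rewrite // ltnS.
Qed.

Lemma sum_ns (g : V -> nat) :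
  (\sum_(v | v != s) (g v + 1) = \sum_(v | v != s) g v + #|V|.-1)%N.
Proof.
rewrite big_split /= sum1dep_card -(cardC1 s); congr (_ + _)%N.
by apply: eq_card => v; rewrite !inE.
Qed.

Lemma upper (f : V -> nat) : parking src tgt s f ->
  (\sum_v f v + m + #|V|.-1 <= #|E|)%N.
Proof.
case/andP => /eqP fs /forallP hA.
have hp : forall A : {set V}, A != set0 -> s \notin A ->
     exists2 v, v \in A & (f v < #|[set e | (src e == v) && (tgt e \notin A)]|)%N.
  move=> A A0 sA; have := hA A; rewrite A0 sA /= => /existsP[v /andP[vA lt]].
  by exists v.
have sA : s \notin [set v | v != s] by rewrite inE eqxx.
have [r [_ rb]] := super_rank hp (erefl _) sA.
have hb : forall v, v != s -> (f v + 1 <= #|back r v|)%N.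
  by move=> v vs; rewrite addn1; apply: rb; rewrite inE.
have e1 : \sum_v f v = \sum_(v | v != s) f v by rewrite (bigD1 s) //= fs.
have := sum_back r; have := fas_lb Hm r.
have : (\sum_(v | v != s) (f v + 1) <= \sum_(v | v != s) #|back r v|)%N.
  by apply: leq_sum => v vs; apply: hb.
have : (\sum_(v | v != s) #|back r v| <= \sum_v #|back r v|)%N.
  by rewrite [X in (_ <= X)%N](bigD1 s) //= leq_addl.
rewrite sum_ns -e1; lia.
Qed.

Lemma lower : exists x : {ffun V -> 'I_(#|E|.+1)},
  parking src tgt s (fun v => nat_of_ord (x v)) &&
  (\sum_v nat_of_ord (x v) + m + #|V|.-1 == #|E|)%N.
Proof.
have [r0 h0] := base.
have [r [[rinj rcost _ _ bk] smin]] := all_inv h0 (erefl _).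
pose g v := if v == s then 0%N else (#|back r v|).-1.
have gE : forall v, (g v < #|E|.+1)%N.
  move=> v; rewrite /g; case: (_ == s) => //; rewrite ltnS.
  exact: leq_trans (leq_pred _) (max_card _).
pose x : {ffun V -> 'I_(#|E|.+1)} := [ffun v => inord (g v)].
exists x.
have xv : forall v, nat_of_ord (x v) = g v.
  by move=> v; rewrite ffunE inordK.
apply/andP; split.
  apply/andP; split; first by rewrite xv /g eqxx.
  apply/forallP => A; apply/implyP => /andP[A0 sA].
  have [a aA] := set0Pn _ A0.
  case: (@arg_minnP _ a (mem A) r aA) => v vA vmin.
  apply/existsP; exists v; apply/andP; split; first exact: vA.
  rewrite xv /g.
  have vs : v != s by apply: contraNN sA => /eqP <-.
  rewrite (negbTE vs).
  apply: (@leq_trans #|back r v|); first by rewrite prednK // bk // inE.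
  apply: subset_leq_card; apply/subsetP => e; rewrite !inE => /andP[-> lt] /=.
  by apply/negP => tA; have := vmin _ tA; rewrite leqNgt lt.
have bs : #|back r s| = 0%N.
  apply/eqP; rewrite cards_eq0; apply/eqP/setP => e; rewrite !inE.
  by case: eqP => //= _; rewrite ltnNge smin.
have cm : #|cost r| = m by apply/eqP; rewrite eqn_leq rcost fas_lb.
have hE := sum_back r; rewrite (bigD1 s) //= bs add0n cm in hE.
have hb' : (\sum_(v | v != s) #|back r v| =
            \sum_(v | v != s) (#|back r v|).-1 + #|V|.-1)%N.
  rewrite -sum_ns; apply: eq_bigr => v vs; rewrite addn1 prednK // bk // inE.
have hx : (\sum_v nat_of_ord (x v) = \sum_(v | v != s) (#|back r v|).-1)%N.
  rewrite (bigD1 s) //= xv /g eqxx add0n; apply: eq_bigr => v vs.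
  by rewrite xv /g (negbTE vs).
apply/eqP; rewrite hx -hE hb'; lia.
Qed.

End Step.

End Aux.

Import GRing.Theory Num.Theory.
Local Open Scope ring_scope.

Theorem theorem1p5 (V E : finType) (src tgt : E -> V) (s : V)
  (Hconn : dconnected src tgt) (Heul : eulerian src tgt) (m : nat)
  (Hm : is_minfas src tgt m) :
  ((size (park src tgt s)).-1 : int) = (#|E| : int) - (#|V| : int) + 1 - (m : int).
Proof.
have [x0 /andP[px0 /eqP hx0]] := lower s Heul Hconn Hm.
set M := (\sum_v nat_of_ord (x0 v))%N in hx0.
have ub : forall x : {ffun V -> 'I_(#|E|.+1)},
    parking src tgt s (fun v => nat_of_ord (x v)) -> (\sum_v nat_of_ord (x v) <= M)%N.
  move=> x px; have := upper Hm px; lia.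
have hc : forall j, (park src tgt s)`_j =
    (\sum_(x : {ffun V -> 'I_(#|E|.+1)} | parking src tgt s (fun v => nat_of_ord (x v)))
        (j == \sum_v nat_of_ord (x v))%N)%:R.
  move=> j; rewrite /park coef_sum natr_sum; apply: eq_bigr => x _.
  by rewrite coefXn.
have hs : size (park src tgt s) = M.+1.
  apply/eqP; rewrite eqn_leq; apply/andP; split.
    apply/leq_sizeP => j hj; rewrite hc big1 // => x px.
    have lt : (\sum_v nat_of_ord (x v) < j)%N.
      by apply: leq_trans hj; rewrite ltnS; exact: ub.
    by rewrite (_ : (j == _) = false) //; apply/negbTE; rewrite neq_ltn lt orbT.
  rewrite ltnNge; apply/negP => /leq_sizeP /(_ M (leqnn M)) /eqP.
  by rewrite hc pnatr_eq0 (bigD1 x0) //= eqxx.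
have V0 : (0 < #|V|)%N by apply/card_gt0P; exists s.
rewrite hs /=.
have hV := prednK V0; clearbody M; move: hx0 hV; set k := #|V|.-1; move=> hx0 hV; rewrite -hV.
rewrite -hx0 -addn1 !PoszD; ring.
Qed.
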